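(* Let $d, N, K \geq 1$ be integers, let $\mathbf{y}_1, \ldots, \mathbf{y}_N \in \mathbb{R}^d$, and let $\mathbf{Y} \in \mathbb{R}^{d \times N}$ be the matrix with columns $\mathbf{y}_1, \ldots, \mathbf{y}_N$; assume $\mathbf{Y} \neq 0$. Let $\rho_k^{[i]} \geq 0$ ($i \in \{1,\ldots,N\}$, $k \in \{1,\ldots,K\}$) satisfy $\sum_{k=1}^K \rho_k^{[i]} = 1$ for every $i$. For $k \in \{1,\ldots,K\}$ let $\mathbf{A}_k = \sum_{i=1}^N \rho_k^{[i]} \mathbf{y}_i \mathbf{y}_i^\mathrm{T}$. For every $\delta > 0$, set $\tau := \delta / \|\mathbf{Y}\|_\mathrm{F}^2$ and \[ \tilde{\mathbf{A}}_k = \sum_{\substack{i=1 \\ \rho_k^{[i]} \geq \tau}}^N \rho_k^{[i]} \mathbf{y}_i \mathbf{y}_i^\mathrm{T}. \] Then $|\lambda_1(\mathbf{A}_k) - \lambda_1(\tilde{\mathbf{A}}_k)| \leq \delta$.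
   Context: $\lambda_1(\mathbf{M})$ denotes the largest eigenvalue of a symmetric matrix $\mathbf{M}$; $\|\cdot\|_\mathrm{F}$ is the Frobenius norm. *)

(* Defs.v *)
From HB Require Import structures.
From mathcomp Require Import all_boot all_order all_algebra.
From mathcomp Require Import classical_sets reals.
Set Implicit Arguments. Unset Strict Implicit. Unset Printing Implicit Defensive.
Import Order.TTheory GRing.Theory Num.Theory.
Local Open Scope ring_scope.
Local Open Scope classical_set_scope.

(* lambda_1(M): the largest eigenvalue of a real square matrix M (for symmetric
   real M the set of eigenvalues is finite and nonempty, so this is its maximum). *)
Definition lambda1 {R : realType} {n : nat} (M : 'M[R]_n) : R :=
  sup [set a : R | eigenvalue M a].

Definition frob2 {R : realType} {m n : nat} (Y : 'M[R]_(m, n)) : R :=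
  \sum_(i < m) \sum_(j < n) Y i j ^+ 2.

Definition Amat {R : realType} {d N K : nat} (Y : 'M[R]_(d, N))
  (rho : 'I_N -> 'I_K -> R) (k : 'I_K) : 'M[R]_d :=
  \sum_(i < N) rho i k *: (col i Y *m (col i Y)^T).

Definition Atilde {R : realType} {d N K : nat} (Y : 'M[R]_(d, N))
  (rho : 'I_N -> 'I_K -> R) (tau : R) (k : 'I_K) : 'M[R]_d :=
  \sum_(i < N | tau <= rho i k) rho i k *: (col i Y *m (col i Y)^T).

(* Main.v *)
Require Import Defs.
From HB Require Import structures.
From mathcomp Require Import all_boot all_order all_algebra.
From mathcomp Require Import classical_sets reals.
From mathcomp Require Import ring lra.
Import Order.TTheory GRing.Theory Num.Theory.
Local Open Scope ring_scope.


Section S.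
Variable R : realType.

Lemma quad (a b c : R) : 0 <= c -> (forall t, 0 <= a + 2*t*b + t^+2*c) -> b^+2 <= a*c.
Proof.
move=> c0 H.
case: (ltrP 0 c) => cp.
  have := H (- b / c).
  have -> : a + 2 * (- b / c) * b + (- b / c) ^+ 2 * c = a - b^+2 / c.
    by field; rewrite gt_eqF.
  rewrite subr_ge0 ler_pdivrMr //.
have c00 : c = 0 by apply/eqP; rewrite eq_le cp c0.
subst c; rewrite mulr0.
case: (eqVneq b 0) => [->|bn0]; first by rewrite expr2 mulr0.
have := H (- (a + 1) / (2 * b)).
have -> : a + 2 * (- (a + 1) / (2 * b)) * b + (- (a + 1) / (2 * b)) ^+ 2 * 0 = -1.
  by field.
by rewrite oppr_ge0 ler10.
Qed.
Definition nv {n} (x : 'rV[R]_n) : R := (x *m x^T) 0 0.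

Lemma nvE n (x : 'rV[R]_n) : nv x = \sum_j x 0 j ^+ 2.
Proof. by rewrite /nv mxE; apply: eq_bigr => j _; rewrite mxE expr2. Qed.

Lemma nv_ge0 n (x : 'rV[R]_n) : 0 <= nv x.
Proof. by rewrite nvE sumr_ge0 // => j _; rewrite sqr_ge0. Qed.

Section Forms.
Variable n : nat.
Definition bf (M : 'M[R]_n) (x y : 'rV[R]_n) : R := (x *m M *m y^T) 0 0.

Lemma nv_gt0 (x : 'rV[R]_n) : x != 0 -> 0 < nv x.
Proof.
move=> xn0; rewrite lt_def nv_ge0 andbT; apply/eqP => h.
move: xn0; rewrite -[x == 0]/(x == 0) => /eqP; apply; apply/rowP => j.
have := h; rewrite nvE => /eqP; rewrite psumr_eq0 => [/allP/(_ j)|].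
  by rewrite mem_index_enum /= sqrf_eq0 mxE => /(_ isT)/eqP.
by move=> i _; rewrite sqr_ge0.
Qed.

Lemma bf1 x : bf 1%:M x x = nv x.
Proof. by rewrite /bf mulmx1. Qed.

Lemma bfDM M1 M2 x y : bf (M1 + M2) x y = bf M1 x y + bf M2 x y.
Proof. by rewrite /bf mulmxDr mulmxDl mxE. Qed.

Lemma bfZM c M x y : bf (c *: M) x y = c * bf M x y.
Proof. by rewrite /bf -scalemxAr -scalemxAl mxE. Qed.

Lemma bfNM M x y : bf (- M) x y = - bf M x y.
Proof. by rewrite /bf mulmxN mulNmx mxE. Qed.

Lemma bf_sum I (r : seq I) (P : pred I) (F : I -> 'M[R]_n) x y :
  bf (\sum_(i <- r | P i) F i) x y = \sum_(i <- r | P i) bf (F i) x y.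
Proof. by rewrite /bf mulmx_sumr mulmx_suml summxE. Qed.

Lemma bfDl M x1 x2 y : bf M (x1 + x2) y = bf M x1 y + bf M x2 y.
Proof. by rewrite /bf !mulmxDl mxE. Qed.

Lemma bfDr M x y1 y2 : bf M x (y1 + y2) = bf M x y1 + bf M x y2.
Proof. by rewrite /bf linearD /= mulmxDr mxE. Qed.

Lemma bfZl M c x y : bf M (c *: x) y = c * bf M x y.
Proof. by rewrite /bf -!scalemxAl mxE. Qed.

Lemma bfZr M c x y : bf M x (c *: y) = c * bf M x y.
Proof. by rewrite /bf linearZ /= -scalemxAr mxE. Qed.

Lemma bf_sym M x y : M^T = M -> bf M y x = bf M x y.
Proof.
move=> sM; rewrite /bf.
have -> : y *m M *m x^T = (x *m M *m y^T)^T by rewrite !trmx_mul trmxK sM mulmxA.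
by rewrite mxE.
Qed.

Lemma CS M x y : M^T = M -> (forall w, 0 <= bf M w w) ->
  bf M x y ^+ 2 <= bf M x x * bf M y y.
Proof.
move=> sM psd; apply: quad => // t.
have := psd (x + t *: y).
rewrite bfDl !bfDr !bfZl !bfZr (@bf_sym M x y sM).
have -> : bf M x x + t * bf M x y + (t * bf M x y + t * (t * bf M y y)) =
  bf M x x + 2 * t * bf M x y + t ^+ 2 * bf M y y by ring.
done.
Qed.

Lemma bf_bound M x : bf M x x <= (2 * \sum_i \sum_j `|M i j|) * nv x.
Proof.
have ->: bf M x x = \sum_i \sum_j x 0 i * M i j * x 0 j.
  rewrite /bf mxE; under eq_bigr => j _ do rewrite !mxE mulr_suml.
  by rewrite exchange_big.
rewrite -mulrA [_ * nv x]mulrC mulrA mulr_sumr; apply: ler_sum => i _; rewrite mulr_sumr.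
apply: ler_sum => j _.
have hi : x 0 i ^+ 2 <= nv x.
  rewrite nvE (bigD1 i) //= lerDl sumr_ge0 // => k _; exact: sqr_ge0.
have hj : x 0 j ^+ 2 <= nv x.
  rewrite nvE (bigD1 j) //= lerDl sumr_ge0 // => k _; exact: sqr_ge0.
rewrite (le_trans (ler_norm _)) // !normrM.
have h2 : `|x 0 i| * `|x 0 j| <= 2 * nv x.
  have := sqr_ge0 (`|x 0 i| - `|x 0 j|).
  rewrite -(real_normK (num_real (x 0 i))) in hi.
  rewrite -(real_normK (num_real (x 0 j))) in hj.
  nra.
have := normr_ge0 (M i j); nra.
Qed.


Lemma nv_mul m x (P : 'M[R]_(n, m)) : nv (x *m P) <= (\sum_j \sum_i P i j ^+ 2) * nv x.
Proof.
rewrite [nv (x *m P)]nvE mulr_suml; apply: ler_sum => j _.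
have -> : (x *m P) 0 j = bf 1%:M x (col j P)^T.
  by rewrite /bf mulmx1 trmxK !mxE; apply: eq_bigr => i _; rewrite !mxE.
have sym1 : (1%:M : 'M[R]_n)^T = 1%:M by rewrite trmx1.
have psd1 : forall w, 0 <= bf 1%:M w w by move=> w; rewrite bf1 nv_ge0.
apply: (le_trans (CS 1%:M x (col j P)^T sym1 psd1)).
rewrite !bf1 mulrC; apply: ler_wpM2r; first exact: nv_ge0.
by rewrite nvE; apply: ler_sum => i _; rewrite !mxE.
Qed.

Local Open Scope classical_set_scope.
Definition Ray (M : 'M[R]_n) := [set r : R | exists2 v : 'rV[R]_n, v != 0 & r = bf M v v / nv v].
Definition mu M := sup (Ray M).

Lemma Ray_ub M : ubound (Ray M) (2 * \sum_i \sum_j `|M i j|).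
Proof.
move=> r [v vn0 ->]; rewrite ler_pdivrMr ?nv_gt0 //; exact: bf_bound.
Qed.

Lemma Ray_n0 M : (0 < n)%N -> Ray M !=set0.
Proof.
move=> n0; exists (bf M (const_mx 1) (const_mx 1) / nv (const_mx 1 : 'rV[R]_n)).
exists (const_mx 1) => //; apply/eqP => /rowP/(_ (Ordinal n0)); rewrite !mxE.
by move/eqP; rewrite oner_eq0.
Qed.

Lemma has_sup_Ray M : (0 < n)%N -> has_sup (Ray M).
Proof. by move=> n0; split; [exact: Ray_n0| eexists; exact: Ray_ub]. Qed.

Lemma Ray_le_mu M v : (0 < n)%N -> v != 0 -> bf M v v <= mu M * nv v.
Proof.
move=> n0 vn0; rewrite -ler_pdivrMr ?nv_gt0 //.
by apply: sup_upper_bound; [exact: has_sup_Ray| exists v].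
Qed.

Lemma Ray_le_mu' M v : (0 < n)%N -> bf M v v <= mu M * nv v.
Proof.
move=> n0; case: (eqVneq v 0) => [->|]; last exact: Ray_le_mu.
have -> : (0 : 'rV[R]_n) = 0 *: 0 by rewrite scale0r.
by rewrite bfZl /nv -scalemxAl mxE !mul0r mulr0.
Qed.

Lemma mu_le M c : (0 < n)%N -> (forall v, v != 0 -> bf M v v <= c * nv v) -> mu M <= c.
Proof.
move=> n0 H; apply: ge_sup; first exact: Ray_n0.
by move=> r [v vn0 ->]; rewrite ler_pdivrMr ?nv_gt0 // H.
Qed.

Lemma eig_le_mu M a : (0 < n)%N -> eigenvalue M a -> a <= mu M.
Proof.
move=> n0 /eigenvalueP [v vM vn0]; apply: sup_upper_bound; first exact: has_sup_Ray.
exists v => //; rewrite /bf vM -scalemxAl mxE -/(nv v) mulfK // gt_eqF // nv_gt0 //.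
Qed.


Lemma bf_scalar a x : bf a%:M x x = a * nv x.
Proof. by rewrite -scalemx1 bfZM bf1. Qed.

Lemma mu_eig M : (0 < n)%N -> M^T = M -> eigenvalue M (mu M).
Proof.
move=> n0 sM; case neig: (eigenvalue M (mu M)) => //; exfalso.
set m0 := mu M.
set B := m0%:M - M.
have qB w : bf B w w = m0 * nv w - bf M w w by rewrite /B bfDM bfNM bf_scalar.
have psdB w : 0 <= bf B w w by rewrite qB subr_ge0; exact: Ray_le_mu'.
have symB : B^T = B by rewrite /B linearB /= tr_scalar_mx sM.
have Bu : B \in unitmx.
  have -> : B = (-1) *: (M - m0%:M) by rewrite scaleN1r opprB.
  rewrite unitmxZ ?unitrN1 // -row_free_unit -kermx_eq0.
  by move: neig; rewrite /eigenvalue /eigenspace => /negbFE.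
set P := invmx B.
set Cp := \sum_j \sum_i P i j ^+ 2.
set cB := 2 * \sum_i \sum_j `|B i j|.
have Cp0 : 0 <= Cp by apply: sumr_ge0 => j _; apply: sumr_ge0 => i _; exact: sqr_ge0.
have cB0 : 0 <= cB by rewrite mulr_ge0 // sumr_ge0 // => i _; rewrite sumr_ge0.
have H1 w : nv w <= Cp * nv (w *m B).
  by rewrite -{1}(mulmxK Bu w); exact: nv_mul.
have H2 w : nv (w *m B) <= cB * bf B w w.
  have cs := CS B w (w *m B) symB psdB.
  have e : bf B w (w *m B) = nv (w *m B) by [].
  rewrite e in cs.
  have bb := bf_bound B (w *m B); rewrite -/cB in bb.
  have q0 := psdB w.
  have X0 : 0 <= nv (w *m B) by apply: nv_ge0.
  case: (eqVneq (nv (w *m B)) 0) => [->|Xn0]; first by rewrite mulr_ge0.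
  have Xp : 0 < nv (w *m B) by rewrite lt_def Xn0 X0.
  rewrite -(ler_pM2r Xp); rewrite expr2 in cs.
  apply: (le_trans cs); rewrite -mulrA mulrCA; exact: ler_wpM2l.
set K := Cp * cB + 1.
have K0 : 0 < K by rewrite /K ltr_wpDl // mulr_ge0.
have H3 w : nv w <= K * bf B w w.
  apply: (le_trans (H1 w)); apply: (le_trans (ler_wpM2l Cp0 (H2 w))).
  rewrite mulrA ler_wpM2r ?psdB // /K lerDl //.
have eps0 : 0 < (2 * K)^-1 by rewrite invr_gt0 mulr_gt0.
have [e [w wn0 ->] He] := sup_adherent eps0 (has_sup_Ray M n0).
have Np : 0 < nv w by apply: nv_gt0.
rewrite -/(mu M) -/m0 ltr_pdivlMr // in He.
have hq : bf B w w < (2 * K)^-1 * nv w by rewrite qB; lra.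
have := H3 w.
have : K * bf B w w < K * ((2 * K)^-1 * nv w) by rewrite ltr_pM2l.
have -> : K * ((2 * K)^-1 * nv w) = nv w / 2 by field; rewrite gt_eqF.
lra.
Qed.


Lemma lambda1_mu M : (0 < n)%N -> M^T = M -> lambda1 M = mu M.
Proof.
move=> n0 sM; apply/eqP; rewrite eq_le; apply/andP; split.
  apply: ge_sup; first by exists (mu M); exact: mu_eig.
  by move=> a /= ea; exact: eig_le_mu.
apply: sup_upper_bound; last exact: mu_eig.
split; first by exists (mu M); exact: mu_eig.
by exists (mu M) => a /= ea; exact: eig_le_mu.
Qed.

End Forms.
Arguments bf {n} M x y.
Arguments mu {n} M.
Arguments Ray {n} M.

Lemma sym_sum d N (Y : 'M[R]_(d, N)) (c : 'I_N -> R) (P : pred 'I_N) :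
  (\sum_(i | P i) c i *: (col i Y *m (col i Y)^T))^T =
   \sum_(i | P i) c i *: (col i Y *m (col i Y)^T).
Proof.
rewrite linear_sum; apply: eq_bigr => i _.
by rewrite linearZ /= trmx_mul trmxK.
Qed.

Lemma bf_term d N (Y : 'M[R]_(d, N)) i v :
  bf (col i Y *m (col i Y)^T) v v = nv (v *m col i Y).
Proof. by rewrite /bf /nv trmx_mul !mulmxA. Qed.

Lemma bf_sum_term d N (Y : 'M[R]_(d, N)) (c : 'I_N -> R) (P : pred 'I_N) v :
  bf (\sum_(i | P i) c i *: (col i Y *m (col i Y)^T)) v v =
  \sum_(i | P i) c i * nv (v *m col i Y).
Proof. by rewrite bf_sum; apply: eq_bigr => i _; rewrite bfZM bf_term. Qed.

Lemma main_aux d N K (hd : (1 <= d)%N) (Y : 'M[R]_(d, N))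
  (rho : 'I_N -> 'I_K -> R) (hrho0 : forall i k, 0 <= rho i k)
  (delta : R) (hdelta : 0 < delta) (k : 'I_K) :
  `| lambda1 (Amat Y rho k) - lambda1 (Atilde Y rho (delta / frob2 Y) k) | <= delta.
Proof.
set tau := delta / frob2 Y.
set E := \sum_(i | ~~ (tau <= rho i k)) rho i k *: (col i Y *m (col i Y)^T).
have AE : Amat Y rho k = Atilde Y rho tau k + E.
  by rewrite /Amat (bigID (fun i => tau <= rho i k)) /=.
have symA : (Amat Y rho k)^T = Amat Y rho k by rewrite /Amat sym_sum.
have symAt : (Atilde Y rho tau k)^T = Atilde Y rho tau k by rewrite /Atilde sym_sum.
rewrite !lambda1_mu //.
have fr0 : 0 <= frob2 Y.
  by rewrite /frob2 sumr_ge0 // => i _; rewrite sumr_ge0 // => j _; rewrite sqr_ge0.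
have tau0 : 0 <= tau by rewrite /tau divr_ge0 // ltW.
have tauf : tau * frob2 Y <= delta.
  case: (eqVneq (frob2 Y) 0) => [->|fn0]; first by rewrite mulr0 ltW.
  by rewrite /tau divfK.
have Epsd v : 0 <= bf E v v.
  by rewrite bf_sum_term sumr_ge0 // => i _; rewrite mulr_ge0 // nv_ge0.
have Ebd v : bf E v v <= delta * nv v.
  rewrite bf_sum_term.
  have step : forall i, ~~ (tau <= rho i k) ->
     rho i k * nv (v *m col i Y) <= tau * ((\sum_i' Y i' i ^+ 2) * nv v).
    move=> i; rewrite -ltNge => hlt.
    apply: ler_pM => //; first exact: nv_ge0; first exact: ltW.
    apply: (le_trans (@nv_mul d 1%N v (col i Y))); rewrite big_ord1.
    by apply: ler_wpM2r; [exact: nv_ge0 | apply: ler_sum => i' _; rewrite !mxE].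
  apply: (le_trans (ler_sum _ step)).
  apply: (@le_trans _ _ (\sum_i tau * ((\sum_i' Y i' i ^+ 2) * nv v))).
    rewrite [X in _ <= X](bigID (fun i => ~~ (tau <= rho i k))) /= lerDl.
    by apply: sumr_ge0 => i _; rewrite mulr_ge0 // mulr_ge0 ?nv_ge0 // sumr_ge0 // => j _; rewrite sqr_ge0.
  rewrite -mulr_sumr -mulr_suml mulrA.
  have -> : \sum_i \sum_i' Y i' i ^+ 2 = frob2 Y by rewrite /frob2 exchange_big.
  by apply: ler_wpM2r => //; exact: nv_ge0.
have Bl v : bf (Atilde Y rho tau k) v v <= bf (Amat Y rho k) v v.
  by rewrite AE bfDM lerDl.
have h1 : mu (Atilde Y rho tau k) <= mu (Amat Y rho k).
  apply: mu_le => // v _; apply: (le_trans (Bl v)); exact: Ray_le_mu'.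
have h2 : mu (Amat Y rho k) <= mu (Atilde Y rho tau k) + delta.
  apply: mu_le => // v _; rewrite AE bfDM mulrDl; apply: lerD; [exact: Ray_le_mu' | exact: Ebd].
rewrite ler_norml; apply/andP; split; lra.
Qed.
End S.

Theorem lemma1 (R : realType) (d N K : nat) (hd : (1 <= d)%N) (hN : (1 <= N)%N)
  (hK : (1 <= K)%N) (Y : 'M[R]_(d, N)) (hY : Y != 0)
  (rho : 'I_N -> 'I_K -> R)
  (hrho0 : forall i k, 0 <= rho i k)
  (hrho1 : forall i, \sum_(k < K) rho i k = 1)
  (delta : R) (hdelta : 0 < delta) (k : 'I_K) :
  `| lambda1 (Amat Y rho k) - lambda1 (Atilde Y rho (delta / frob2 Y) k) | <= delta.
Proof. exact: main_aux. Qed.
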